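(* Let $p$ be an odd prime and $k\in\mathbb{N}$. Then $\Delta_D(H_3(\mathbb{Z}/p^k\mathbb{Z}))^*$ is disconnected if and only if $k=1$.
   Context: $H_3(\mathbb{Z}/p^k\mathbb{Z})=\langle y_1,y_2,w\mid [y_1,y_2]=w,\ y_1^{p^k}=y_2^{p^k}=w^{p^k}=[y_1,w]=[y_2,w]=e\rangle$ for an odd prime $p$. The deep commuting graph $\Delta_D(G)$ has vertex set $G$, distinct vertices adjacent iff their preimages commute in a Schur cover $\tilde G$ of $G$ (a central extension $\{e\}\to M(G)\to\tilde G\to G\to\{e\}$ with kernel contained in $Z(\tilde G)\cap[\tilde G,\tilde G]$, of maximal order; $M(G)$ the Schur multiplier). A vertex is dominant if adjacent to every other vertex; the reduced graph $\Gamma^*$ is the subgraph induced by the non-dominant vertices. *)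

(* Defs.v *)
From HB Require Import structures.
From mathcomp Require Import all_boot all_order all_algebra all_fingroup all_solvable.
From mathcomp Require Import ring.
Set Implicit Arguments. Unset Strict Implicit. Unset Printing Implicit Defensive.
Import GRing.Theory.

(* This is the group of upper unitriangular 3x3 matrices over Z/nZ, with    *)
(* y1 = (1,0,0), y2 = (0,1,0), w = (0,0,1) (w = [y1,y2] up to sign, which   *)
(* does not matter for the isomorphism type).                               *)

Definition heis (n : nat) : Type := ('Z_n * 'Z_n * 'Z_n)%type.

Section Heis.
Variable n : nat.
Local Open Scope ring_scope.

HB.instance Definition _ := Finite.copy (heis n) ('Z_n * 'Z_n * 'Z_n)%type.

Definition heis_mul (x y : heis n) : heis n :=
  let: (a, b, c) := x in let: (a', b', c') := y in
  (a + a', b + b', c + c' + a * b').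
Definition heis_one : heis n := (0, 0, 0).
Definition heis_inv (x : heis n) : heis n :=
  let: (a, b, c) := x in (- a, - b, - c + a * b).

Lemma heis_mulA : associative heis_mul.
Proof. by move=> [[a b] c] [[a' b'] c'] [[a'' b''] c''] /=; congr (_, _, _); ring. Qed.
Lemma heis_mul1 : left_id heis_one heis_mul.
Proof. by move=> [[a b] c] /=; congr (_, _, _); ring. Qed.
Lemma heis_mulV : left_inverse heis_one heis_inv heis_mul.
Proof. by move=> [[a b] c] /=; congr (_, _, _); ring. Qed.

HB.instance Definition _ :=
  Finite_isGroup.Build (heis n) heis_mulA heis_mul1 heis_mulV.
End Heis.

Definition H3 (p k : nat) : finGroupType := heis (p ^ k).

Local Open Scope group_scope.

Definition stem_extension (gT hT : finGroupType) (G : {set gT})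
    (f : {morphism [set: hT] >-> gT}) : Prop :=
  f @* [set: hT] = G /\
  'ker f \subset 'Z([set: hT]) :&: [~: [set: hT], [set: hT]].

(* A Schur cover: a stem extension whose kernel has maximal order among all *)
(* stem extensions of G (the kernel is then the Schur multiplier).          *)
Definition schur_cover (gT hT : finGroupType) (G : {set gT})
    (f : {morphism [set: hT] >-> gT}) : Prop :=
  stem_extension G f /\
  forall (hT' : finGroupType) (f' : {morphism [set: hT'] >-> gT}),
    stem_extension G f' -> #|'ker f'| <= #|'ker f|.

Definition deep_adj (gT hT : finGroupType) (f : {morphism [set: hT] >-> gT})
    (x y : gT) : bool :=
  (x != y) && [exists x' : hT, exists y' : hT,
     [&& f x' == x, f y' == y & x' * y' == y' * x']].

Definition dominant (T : finType) (V : {set T}) (e : rel T) (v : T) : bool :=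
  (v \in V) && [forall u in V, (u != v) ==> e v u].

Definition reduced_vertices (T : finType) (V : {set T}) (e : rel T) : {set T} :=
  [set v in V | ~~ dominant V e v].

Definition induced_rel (T : finType) (W : {set T}) (e : rel T) : rel T :=
  fun x y => [&& x \in W, y \in W & e x y].

Definition disconnected_on (T : finType) (W : {set T}) (e : rel T) : Prop :=
  exists x y, [/\ x \in W, y \in W & ~~ connect (induced_rel W e) x y].

(* Main.v *)
From HB Require Import structures.
Require Import Defs.
From mathcomp Require Import all_boot all_order all_algebra all_fingroup all_solvable.
From mathcomp Require Import ring zify.
Set Implicit Arguments. Unset Strict Implicit. Unset Printing Implicit Defensive.
Import GRing.Theory.

Section HeisFacts.
Variable n : nat.
Local Open Scope group_scope.
Implicit Types a b c : 'Z_n.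

Lemma hmulE a b c a' b' c' :
  ((a, b, c) : heis n) * ((a', b', c') : heis n) = ((a + a', b + b', c + c' + a * b')%R : heis n) :> heis n.
Proof. by []. Qed.

Lemma hinvE a b c : ((a, b, c) : heis n)^-1 = ((- a, - b, - c + a * b)%R : heis n) :> heis n.
Proof. by []. Qed.

Lemma honeE : (1 : heis n) = ((0, 0, 0)%R : heis n).
Proof. by []. Qed.

Lemma hexpE a b c i : ((a, b, c) : heis n) ^+ i =
   ((i%:R * a, i%:R * b, i%:R * c + 'C(i, 2)%:R * a * b)%R : heis n) :> heis n.
Proof.
elim: i => [|i IH]; first by rewrite expg0 honeE /= !mul0r !addr0.
rewrite expgS IH hmulE binS bin1 !natrD; congr (_, _, _); ring.
Qed.

Lemma hcommE a b c a' b' c' :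
  [~ ((a, b, c) : heis n), ((a', b', c') : heis n)] = ((0, 0, a * b' - a' * b)%R : heis n) :> heis n.
Proof.
rewrite /commg /conjg !hinvE !hmulE; congr (_, _, _); ring.
Qed.
End HeisFacts.

Definition cov (n : nat) : Type := ('Z_n * 'Z_n * 'Z_n * 'Z_n * 'Z_n)%type.

Section Cov.
Variable n : nat.
Local Open Scope ring_scope.

HB.instance Definition _ := Finite.copy (cov n) ('Z_n * 'Z_n * 'Z_n * 'Z_n * 'Z_n)%type.

Definition okn := odd n && (1 < n)%N.
Definition hh : 'Z_n := ((n.+1)./2)%:R.
Definition BB (x : 'Z_n) : 'Z_n := x * (x - 1) * hh.

Lemma two_hh : okn -> 2 * hh = 1.
Proof.
case/andP=> on n1; rewrite /hh -natrM.
have -> : (2 * (n.+1)./2 = n + 1)%N.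
  by rewrite -[in RHS](odd_double_half n) on /= -addn1; lia.
by rewrite natrD pchar_Zp // add0r.
Qed.

Lemma BB_add x y : okn -> BB (x + y) = BB x + BB y + x * y.
Proof.
move=> ok; have : BB (x + y) = BB x + BB y + x * y * (2 * hh) by rewrite /BB; ring.
by rewrite two_hh // mulr1.
Qed.

Lemma BB0 : BB 0 = 0.
Proof. by rewrite /BB !mul0r. Qed.

Definition cmul (g g' : cov n) : cov n :=
  let: (a, b, e, x, y) := g in let: (a', b', e', x', y') := g' in
  (a + a', b + b', e + e' - a' * b,
   x + x' + (if okn then e * a' - b * BB a' else 0),
   y + y' + (if okn then e * b' - a' * BB b - a' * b * b' else 0)).
Definition cone : cov n := (0, 0, 0, 0, 0).
Definition cinv (g : cov n) : cov n :=
  let: (a, b, e, x, y) := g in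
  (- a, - b, - e - a * b,
   - x - (if okn then (- e - a * b) * a + b * BB a else 0),
   - y - (if okn then (- e - a * b) * b - a * BB (- b) + a * b * b else 0)).

Lemma cmulA : associative cmul.
Proof.
move=> [[[[a b] e] x] y] [[[[a' b'] e'] x'] y'] [[[[a'' b''] e''] x''] y''].
have [ok|nok] := boolP okn; rewrite /cmul ?ok ?(negbTE nok).
  by rewrite !BB_add //; congr (_, _, _, _, _); ring.
by congr (_, _, _, _, _); ring.
Qed.

Lemma cmul1 : left_id cone cmul.
Proof.
move=> [[[[a b] e] x] y]; rewrite /cmul /cone; case: okn; rewrite ?BB0;
  congr (_, _, _, _, _); ring.
Qed.

Lemma cmulV : left_inverse cone cinv cmul.
Proof.
move=> [[[[a b] e] x] y]; rewrite /cmul /cinv /cone; case: okn;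
  congr (_, _, _, _, _); ring.
Qed.

HB.instance Definition _ := Finite_isGroup.Build (cov n) cmulA cmul1 cmulV.

End Cov.

Section CovMorph.
Variable n : nat.
Hypothesis ok : okn n.
Local Open Scope group_scope.

Definition f0 (g : cov n) : heis n := let: (a, b, e, x, y) := g in (a, b, e + a * b)%R.

Lemma f0M : {morph f0 : g g' / g * g'}.
Proof.
move=> [[[[a b] e] x] y] [[[[a' b'] e'] x'] y'] /=.
by rewrite /f0 /= hmulE; congr (_, _, _); ring.
Qed.

Definition f0m := morphm (introT (@morphicP _ _ [set: cov n] f0) (in2W f0M)).

Lemma f0mE g : f0m g = f0 g. Proof. by []. Qed.

Lemma f0_onto : f0m @* [set: cov n] = [set: heis n].
Proof.
apply/eqP; rewrite eqEsubset subsetT /=; apply/subsetP=> [[[a b] c]] _.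
rewrite morphimEdom; apply/imsetP; exists ((a, b, c - a * b, 0, 0)%R : cov n) => //.
by rewrite /= /morphm /f0; congr (_, _, _); ring.
Qed.

Definition kz (x y : 'Z_n) : cov n := (0, 0, 0, x, y)%R.

Lemma cmulE (g g' : cov n) : g * g' = cmul g g'. Proof. by []. Qed.
Lemma cinvE (g : cov n) : g^-1 = cinv g. Proof. by []. Qed.

Lemma kz_central x y (g : cov n) : kz x y * g = g * kz x y.
Proof.
case: g => [[[[a b] e] x'] y']; rewrite !cmulE /cmul /kz.
by case: okn; rewrite ?BB0; congr (_, _, _, _, _); ring.
Qed.

Definition cu : cov n := (0, 0, 1, 0, 0)%R.
Definition cy1 : cov n := (1, 0, 0, 0, 0)%R.
Definition cy2 : cov n := (0, 1, 0, 0, 0)%R.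

Lemma comm_cu_cy1 : [~ cu, cy1] = kz 1%R 0%R.
Proof.
rewrite /commg /conjg !cmulE !cinvE /cmul /cinv /cu /cy1 /kz ok.
rewrite /BB; congr (_, _, _, _, _); ring.
Qed.

Lemma comm_cu_cy2 : [~ cu, cy2] = kz 0%R 1%R.
Proof.
rewrite /commg /conjg !cmulE !cinvE /cmul /cinv /cu /cy2 /kz ok.
rewrite /BB; congr (_, _, _, _, _); ring.
Qed.

Lemma kzM x y x' y' : kz x y * kz x' y' = kz (x + x')%R (y + y')%R.
Proof.
rewrite cmulE /cmul /kz; case: okn; rewrite ?BB0; congr (_, _, _, _, _); ring.
Qed.

Lemma kzX1 i : kz 1%R 0%R ^+ i = kz (i%:R)%R 0%R.
Proof.
elim: i => [|i IH]; first by rewrite expg0.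
by rewrite expgS IH kzM addr0 -natr1 addrC.
Qed.

Lemma kzX2 i : kz 0%R 1%R ^+ i = kz 0%R (i%:R)%R.
Proof.
elim: i => [|i IH]; first by rewrite expg0.
by rewrite expgS IH kzM add0r -natr1 addrC.
Qed.

Lemma f0E a b e x y : f0 (a, b, e, x, y) = (a, b, e + a * b)%R. Proof. by []. Qed.

Lemma ker_f0 g : g \in 'ker f0m -> exists x y, g = kz x y.
Proof.
move/mker => H; have {H} : f0 g = 1 by exact: H.
case: g => [[[[a b] e] x] y]; rewrite f0E honeE.
move=> /eqP; rewrite !xpair_eqE => /andP[/andP[/eqP-> /eqP->]] /eqP.
rewrite mul0r addr0 => ->; by exists x, y.
Qed.

Lemma stem_f0 : stem_extension [set: heis n] f0m.
Proof.
split; first exact: f0_onto.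
apply/subsetP=> _ /ker_f0 [x [y ->]]; rewrite inE; apply/andP; split.
  by apply/centerP; split=> // g' _; exact: kz_central.
have -> : kz x y = kz ((nat_of_ord x)%:R)%R 0%R * kz 0%R ((nat_of_ord y)%:R)%R.
  by rewrite kzM addr0 add0r !natr_Zp.
rewrite -kzX1 -kzX2 -comm_cu_cy1 -comm_cu_cy2.
by rewrite groupM ?groupX // mem_commg ?inE.
Qed.

Lemma card_ker_f0 : (#|'Z_n| * #|'Z_n| <= #|'ker f0m|)%N.
Proof.
rewrite -card_prod -(card_imset _ (f := fun u : 'Z_n * 'Z_n => kz u.1 u.2)).
  apply/subset_leq_card/subsetP=> _ /imsetP[[x y] _ ->].
  apply/kerP; first by rewrite inE.
  rewrite [LHS](_ : _ = f0 (kz x y)) // /kz f0E honeE; congr (_, _, _); rewrite mul0r addr0 //.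
by move=> [x y] [x' y'] [-> ->].
Qed.

End CovMorph.

Section Stem.
Local Open Scope group_scope.
Variable n : nat.
Hypothesis n_odd : odd n.
Hypothesis n_gt1 : (1 < n)%N.
Variables (hT : finGroupType) (f : {morphism [set: hT] >-> heis n}).
Hypothesis fonto : f @* [set: hT] = [set: heis n].
Hypothesis kerZ : 'ker f \subset 'Z([set: hT]) :&: [~: [set: hT], [set: hT]].

Definition Y1 : heis n := (1, 0, 0)%R.
Definition Y2 : heis n := (0, 1, 0)%R.
Definition Wc : heis n := (0, 0, 1)%R.

Definition ctr (g : hT) := forall w, commute g w.

Lemma ctr_conj x w : ctr x -> x ^ w = x.
Proof. by move=> cx; rewrite /conjg (cx w) mulKg. Qed.

Lemma conj_byctr x k : ctr k -> x ^ k = x.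
Proof. by move=> ck; rewrite /conjg -(ck x) mulgA mulVg mul1g. Qed.

Lemma ctrM x y : ctr x -> ctr y -> ctr (x * y).
Proof. by move=> cx cy w; apply: commute_sym; apply: commuteM; apply: commute_sym. Qed.

Lemma ctrX x i : ctr x -> ctr (x ^+ i).
Proof. by move=> cx w; apply: commute_sym; apply: commuteX; apply: commute_sym. Qed.

Lemma ctrV x : ctr x -> ctr x^-1.
Proof. by move=> cx w; apply: commute_sym; apply: commuteV; apply: commute_sym. Qed.

Lemma ctr1 : ctr 1.
Proof. by move=> w; rewrite /commute mulg1 mul1g. Qed.

Lemma kctr k : k \in 'ker f -> ctr k.
Proof.
move=> kK w; have := subsetP kerZ k kK; rewrite inE => /andP[/centerP[_ cz] _].
exact: cz.
Qed.

Lemma heis_comm3 (x y z : heis n) : [~ [~ x, y], z] = 1.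
Proof.
case: x => [[a b] c]; case: y => [[a' b'] c']; case: z => [[a'' b''] c''].
by rewrite !hcommE honeE; congr (_, _, _); ring.
Qed.

Lemma R3ker u v w : [~ [~ u, v], w] \in 'ker f.
Proof. by apply/kerP; rewrite ?inE // !morphR ?inE // heis_comm3. Qed.

Lemma R3ctr u v w : ctr [~ [~ u, v], w].
Proof. exact/kctr/R3ker. Qed.

Section Hom.
Variable g : hT.
Hypothesis hg : forall w, ctr [~ g, w].

Lemma hM u w : [~ g, u * w] = [~ g, u] * [~ g, w].
Proof. by rewrite commgMJ ctr_conj // hg. Qed.

Lemma hX u i : [~ g, u ^+ i] = [~ g, u] ^+ i.
Proof.
elim: i => [|i IH]; first by rewrite !expg0 commg1.
by rewrite !expgS hM IH.
Qed.

Lemma hK k : ctr k -> [~ g, k] = 1.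
Proof. by move=> ck; apply/eqP/commgP/commute_sym/ck. Qed.

Lemma hV u : [~ g, u^-1] = [~ g, u]^-1.
Proof.
by rewrite -[LHS]mulg1 -(mulgV [~ g, u]) mulgA -hM mulVg commg1 mul1g.
Qed.

Lemma hR u v : [~ g, [~ u, v]] = 1.
Proof.
have -> : [~ u, v] = u^-1 * (v^-1 * (u * v)) by [].
by rewrite !hM !hV (hg u [~ g, v]) mulKg mulVg.
Qed.

Lemma hXl u i : [~ g ^+ i, u] = [~ g, u] ^+ i.
Proof.
elim: i => [|i IH]; first by rewrite !expg0 comm1g.
by rewrite !expgS commMgJ ctr_conj // IH.
Qed.

End Hom.

Lemma heis_word a b e :
  Y1 ^+ a * Y2 ^+ b * Wc ^+ e = ((a%:R, b%:R, a%:R * b%:R + e%:R)%R : heis n).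
Proof. by rewrite /Y1 /Y2 /Wc !hexpE !hmulE; congr (_, _, _); ring. Qed.

Lemma Y1Y2 : [~ Y1, Y2] = Wc.
Proof. by rewrite /Y1 /Y2 /Wc hcommE; congr (_, _, _); ring. Qed.

Definition lift (g : heis n) : hT := odflt 1 [pick x | f x == g].

Lemma liftE g : f (lift g) = g.
Proof.
have : g \in f @* [set: hT] by rewrite fonto inE.
case/morphimP=> x _ _ ->; rewrite /lift; case: pickP => [y /eqP // | H].
by have := H x; rewrite eqxx.
Qed.

Definition y1 := lift Y1.
Definition y2 := lift Y2.
Definition cc := [~ y1, y2].
Definition d1 := [~ cc, y1].
Definition d2 := [~ cc, y2].

Lemma fcc : f cc = Wc.
Proof. by rewrite morphR ?inE // !liftE Y1Y2. Qed.

Lemma hcc w : ctr [~ cc, w].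
Proof. exact: R3ctr. Qed.

Lemma d1ctr : ctr d1. Proof. exact: R3ctr. Qed.
Lemma d2ctr : ctr d2. Proof. exact: R3ctr. Qed.

Lemma decomp u : exists2 k, k \in 'ker f &
  u = y1 ^+ (f u).1.1 * y2 ^+ (f u).1.2 * cc ^+ ((f u).2 - (f u).1.1 * (f u).1.2)%R * k.
Proof.
set w := _ * _ * _; exists (w^-1 * u); last by rewrite mulKVg.
apply/kerP; rewrite ?inE // morphM ?inE // morphV ?inE //.
suff -> : f w = f u by rewrite mulVg.
rewrite /w !morphM ?inE // !morphX ?inE // !liftE fcc heis_word !natr_Zp.
by case: (f u) => [[A B] C] /=; congr (_, _, _); ring.
Qed.

Lemma comm_cc u : [~ cc, u] = d1 ^+ (f u).1.1 * d2 ^+ (f u).1.2.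
Proof.
have [k kK {1}->] := decomp u.
rewrite !(@hM cc hcc) !(@hX cc hcc) (@hK cc _ (kctr kK)) commgg expg1n !mulg1.
by [].
Qed.

Lemma n_gt0 : (0 < n)%N. Proof. exact: ltnW. Qed.

Lemma natn0 : (n%:R : 'Z_n)%R = 0%R. Proof. exact: pchar_Zp. Qed.

Lemma Y1n : Y1 ^+ n = 1.
Proof. by rewrite /Y1 hexpE natn0 honeE; congr (_, _, _); ring. Qed.
Lemma Y2n : Y2 ^+ n = 1.
Proof. by rewrite /Y2 hexpE natn0 honeE; congr (_, _, _); ring. Qed.

Lemma y1n_ker : y1 ^+ n \in 'ker f.
Proof. by apply/kerP; rewrite ?inE // morphX ?inE // liftE Y1n. Qed.
Lemma y2n_ker : y2 ^+ n \in 'ker f.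
Proof. by apply/kerP; rewrite ?inE // morphX ?inE // liftE Y2n. Qed.

Lemma d1n : d1 ^+ n = 1.
Proof. by rewrite /d1 -(@hX cc hcc) (@hK cc _ (kctr y1n_ker)). Qed.
Lemma d2n : d2 ^+ n = 1.
Proof. by rewrite /d2 -(@hX cc hcc) (@hK cc _ (kctr y2n_ker)). Qed.

Lemma comm_y1_y2X i : [~ y1, y2 ^+ i] = cc ^+ i * d2 ^+ 'C(i, 2).
Proof.
elim: i => [|i IH]; first by rewrite !expg0 commg1 mulg1.
rewrite expgSr commgMJ -/cc IH conjMg !conjXg conjg_mulR -/d2 (ctr_conj _ d2ctr).
rewrite expgMn; last exact/commute_sym/d2ctr.
by rewrite binS bin1 addnC expgD !mulgA -expgS -mulgA.
Qed.

Lemma dvdn_bin2 : (n %| 'C(n, 2))%N.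
Proof.
have e : 'C(n, 2) = (n * n./2)%N.
  rewrite bin2; have h := odd_double_half n; rewrite n_odd /= in h.
  have -> : n.-1 = n./2.*2 by rewrite -{1}h.
  by rewrite -doubleMr doubleK.
by rewrite e dvdn_mulr.
Qed.

Lemma ccn : cc ^+ n = 1.
Proof.
have := comm_y1_y2X n.
rewrite (@hK y1 _ (kctr y2n_ker)).
rewrite -(expg_mod _ d2n) (eqP dvdn_bin2) expg0 mulg1 => <- //.
Qed.

Definition inN (g : hT) := exists i j l : nat, g = cc ^+ i * d1 ^+ j * d2 ^+ l.

Lemma inN1 : inN 1.
Proof. by exists 0%N, 0%N, 0%N; rewrite !expg0 !mulg1. Qed.

Lemma ctr_swap x z y : ctr z -> x * z * y = x * y * z.
Proof. by move=> cz; rewrite -!mulgA (cz y). Qed.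

Lemma inNM x y : inN x -> inN y -> inN (x * y).
Proof.
move=> [i [j [l ->]]] [i' [j' [l' ->]]].
exists (i + i')%N, (j + j')%N, (l + l')%N; rewrite !expgD.
have c1 := ctrX j d1ctr; have c2 := ctrX l d2ctr.
rewrite !mulgA (ctr_swap _ _ c2) (ctr_swap _ _ c1) (ctr_swap _ _ c2).
by [].
Qed.

Lemma inNX x i : inN x -> inN (x ^+ i).
Proof.
move=> hx; elim: i => [|i IH]; first by rewrite expg0; exact: inN1.
by rewrite expgS; apply: inNM.
Qed.

Lemma inN_cc : inN cc.
Proof. by exists 1%N, 0%N, 0%N; rewrite !expg0 !mulg1 expg1. Qed.
Lemma inN_d1 : inN d1.
Proof. by exists 0%N, 1%N, 0%N; rewrite !expg0 mulg1 mul1g expg1. Qed.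
Lemma inN_d2 : inN d2.
Proof. by exists 0%N, 0%N, 1%N; rewrite !expg0 !mul1g expg1. Qed.

Lemma invX (x : hT) : x ^+ n = 1 -> x^-1 = x ^+ n.-1.
Proof.
move=> xn; rewrite -[x^-1]mulg1 -xn -(prednK n_gt0) expgS mulKg.
by [].
Qed.

Lemma inNV_cc : inN cc^-1.
Proof. by rewrite (invX ccn); apply/inNX/inN_cc. Qed.
Lemma inNV_d1 : inN d1^-1.
Proof. by rewrite (invX d1n); apply/inNX/inN_d1. Qed.
Lemma inNV_d2 : inN d2^-1.
Proof. by rewrite (invX d2n); apply/inNX/inN_d2. Qed.

Lemma inN_comm_cc w : inN [~ cc, w].
Proof. by rewrite comm_cc; apply: inNM; apply: inNX; [exact: inN_d1 | exact: inN_d2]. Qed.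

Lemma inN_conj x w : inN x -> inN (x ^ w).
Proof.
move=> [i [j [l ->]]]; rewrite !conjMg !conjXg (ctr_conj _ d1ctr) (ctr_conj _ d2ctr).
rewrite conjg_mulR expgMn; last exact: commute_sym (hcc _ _).
apply: inNM; [apply: inNM|]; try apply: inNX.
- by apply: inNM; apply: inNX; [exact: inN_cc | exact: inN_comm_cc].
- exact: inN_d1.
- exact: inN_d2.
Qed.

Lemma closure (S : hT -> Prop) :
  S 1 -> (forall x y, S x -> S y -> S (x * y)) -> S y1 -> S y2 -> S cc ->
  (forall k, k \in 'ker f -> S k) -> forall u, S u.
Proof.
move=> S1 SM Sy1 Sy2 Scc SK u.
have SX x i : S x -> S (x ^+ i).
  by move=> Sx; elim: i => [|i IH]; rewrite ?expg0 // expgS; apply: (SM).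
have [k kK ->] := decomp u.
apply: (SM); last exact: SK.
apply: (SM); last exact: SX.
by apply: (SM); apply: SX.
Qed.

Lemma inN_y1 v : inN [~ y1, v].
Proof.
elim/closure: v.
- by rewrite commg1; exact: inN1.
- by move=> x y Sx Sy; rewrite commgMJ; apply: inNM => //; apply: inN_conj.
- by rewrite commgg; exact: inN1.
- exact: inN_cc.
- by rewrite -invgR; exact: inNV_d1.
- by move=> k kK; rewrite (@hK y1 _ (kctr kK)); exact: inN1.
Qed.

Lemma inN_y2 v : inN [~ y2, v].
Proof.
elim/closure: v.
- by rewrite commg1; exact: inN1.
- by move=> x y Sx Sy; rewrite commgMJ; apply: inNM => //; apply: inN_conj.
- by rewrite -invgR; exact: inNV_cc.
- by rewrite commgg; exact: inN1.
- by rewrite -invgR; exact: inNV_d2.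
- by move=> k kK; rewrite (@hK y2 _ (kctr kK)); exact: inN1.
Qed.

Lemma inN_comm u v : inN [~ u, v].
Proof.
move: v; elim/closure: u.
- by move=> v; rewrite comm1g; exact: inN1.
- by move=> x y Sx Sy v; rewrite commMgJ; apply: inNM => //; apply: inN_conj.
- exact: inN_y1.
- exact: inN_y2.
- exact: inN_comm_cc.
- move=> k kK v; have -> : [~ k, v] = 1 by apply/eqP/commgP/kctr.
  exact: inN1.
Qed.

Lemma ker_inN k : k \in 'ker f -> inN k.
Proof.
move=> kK; have := subsetP kerZ k kK; rewrite inE => /andP[_].
case/gen_prodgP=> m [cs csP ->].
apply: (big_ind inN inN1 inNM) => i _.
by case/imset2P: (csP i) => x y _ _ ->; exact: inN_comm.
Qed.

Lemma fd1 : f d1 = 1.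
Proof. exact/mker/R3ker. Qed.
Lemma fd2 : f d2 = 1.
Proof. exact/mker/R3ker. Qed.

Lemma WcX i : Wc ^+ i = ((0, 0, i%:R)%R : heis n).
Proof. by rewrite /Wc hexpE; congr (_, _, _); ring. Qed.

Lemma natr_eq0 i : ((i%:R : 'Z_n) == 0)%R = (n %| i)%N.
Proof.
apply/eqP/idP => [h|h].
  by have := val_Zp_nat n_gt1 i; rewrite h /= => /esym/eqP; rewrite -/(dvdn n i).
by apply: ord_inj; rewrite val_Zp_nat //= (eqP h).
Qed.

Lemma ker_form k : k \in 'ker f -> exists j l : nat, k = d1 ^+ j * d2 ^+ l.
Proof.
move=> kK; have [i [j [l ek]]] := ker_inN kK.
exists j, l; rewrite ek.
have : f k = 1 by exact: mker.
rewrite ek !morphM ?inE // !morphX ?inE // fd1 fd2 !expg1n !mulg1 fcc WcX honeE.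
move=> /eqP; rewrite !xpair_eqE eqxx /= natr_eq0 => hi.
by rewrite -(expg_mod _ ccn) (eqP hi) expg0 mul1g.
Qed.

Definition L := lift.

Lemma lift_ker u : (L (f u))^-1 * u \in 'ker f.
Proof. by apply/kerP; rewrite ?inE // morphM ?inE // morphV ?inE // liftE mulVg. Qed.

Lemma commute_kk a b k k' : ctr k -> ctr k' -> commute (a * k) (b * k') <-> commute a b.
Proof.
move=> ck ck'; rewrite /commute.
have -> : a * k * (b * k') = a * b * (k * k').
  by rewrite -!mulgA; congr (_ * _); rewrite !mulgA (ck b).
have -> : b * k' * (a * k) = b * a * (k * k').
  by rewrite -!mulgA; congr (_ * _); rewrite !mulgA (ck' a) -!mulgA (ck' k).
by split=> [/mulIg|->].
Qed.

Lemma commute_lift u v : commute u v <-> commute (L (f u)) (L (f v)).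
Proof.
have eu : u = L (f u) * ((L (f u))^-1 * u) by rewrite mulKVg.
have ev : v = L (f v) * ((L (f v))^-1 * v) by rewrite mulKVg.
rewrite {1}eu {1}ev; apply: commute_kk; exact/kctr/lift_ker.
Qed.

Lemma comm_central_lift (t : 'Z_n) u :
  [~ L ((0, 0, t)%R : heis n), u] = d1 ^+ ((f u).1.1 * t) * d2 ^+ ((f u).1.2 * t).
Proof.
set z := L _; have [k kK ez] := decomp z.
have fz : f z = ((0, 0, t)%R : heis n) by apply: liftE.
have e1 : (f z).1.1 = 0%R by rewrite fz.
have e2 : (f z).1.2 = 0%R by rewrite fz.
have e3 : (f z).2 = t by rewrite fz.
rewrite ez e1 e2 e3 !expg0 !mul1g mulr0 subr0 commMgJ conj_byctr; last exact: kctr.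
rewrite (@hXl cc hcc) comm_cc.
have -> : [~ k, u] = 1 by apply/eqP/commgP/kctr.
rewrite mulg1 expgMn; last exact: (ctrX _ d1ctr (d2 ^+ _)).
by rewrite -!expgM.
Qed.

Lemma heis_commuteE (x y : heis n) : commute x y <-> (x.1.1 * y.1.2 = y.1.1 * x.1.2)%R.
Proof.
case: x => [[a b] c]; case: y => [[a' b'] c']; rewrite /commute !hmulE /=.
split=> [/eqP| h].
  rewrite !xpair_eqE => /andP[_ /eqP h].
  by apply: (addrI (c + c')%R); rewrite h; ring.
by rewrite h; congr (_, _, _); ring.
Qed.

Lemma lift_commute_heis x y : commute (L x) (L y) -> commute x y.
Proof.
by move=> h; rewrite -(liftE x) -(liftE y) /commute -!morphM ?inE // h.
Qed.

Section Indep.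
Hypothesis big : (n * n <= #|'ker f|)%N.

Definition FF (u : 'I_n * 'I_n) : hT := d1 ^+ u.1 * d2 ^+ u.2.

Lemma FF_inj : {in [set: 'I_n * 'I_n] &, injective FF}.
Proof.
apply/imset_injP; rewrite eqn_leq leq_imset_card /= cardsT card_prod card_ord.
apply: leq_trans big _; apply: subset_leq_card; apply/subsetP=> k kK.
have [j [l ->]] := ker_form kK.
have -> : d1 ^+ j * d2 ^+ l = FF (Ordinal (ltn_pmod j n_gt0), Ordinal (ltn_pmod l n_gt0)).
  by rewrite /FF /= (expg_mod _ d1n) (expg_mod _ d2n).
by apply: imset_f; rewrite inE.
Qed.

Lemma indep j l : d1 ^+ j * d2 ^+ l = 1 -> (n %| j)%N /\ (n %| l)%N.
Proof.
move=> h.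
have := @FF_inj (Ordinal (ltn_pmod j n_gt0), Ordinal (ltn_pmod l n_gt0))
                (Ordinal n_gt0, Ordinal n_gt0).
rewrite !inE /FF /= (expg_mod _ d1n) (expg_mod _ d2n) h !expg0 mulg1 => /(_ isT isT erefl).
by case=> h1 h2; rewrite /dvdn h1 h2.
Qed.

Notation e := (deep_adj f).
Notation W := (reduced_vertices [set: heis n] (deep_adj f)).

Lemma adjE x y : e x y = (x != y) && (L x * L y == L y * L x).
Proof.
rewrite /deep_adj; congr andb; apply/existsP/eqP.
  case=> x' /existsP[y' /and3P[/eqP fx /eqP fy /eqP cxy]].
  by have /commute_lift := cxy; rewrite fx fy.
move=> cl; exists (L x); apply/existsP; exists (L y).
by rewrite !liftE !eqxx cl eqxx.
Qed.

Lemma adj_sym : symmetric e.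
Proof. by move=> x y; rewrite !adjE eq_sym; congr andb; apply/eqP/eqP=> ->. Qed.

Lemma notW1 : 1 \notin W.
Proof.
rewrite inE /= inE negbK /dominant inE /=; apply/forallP=> u; apply/implyP=> _.
apply/implyP=> u1; rewrite adjE eq_sym u1 /=; apply/eqP.
have : L 1 \in 'ker f by apply/kerP; rewrite ?inE ?liftE.
by move/kctr; apply.
Qed.

Lemma inW x u : u != x -> ~~ (L x * L u == L u * L x) -> x \in W.
Proof.
move=> ux nc; rewrite inE /= inE /dominant inE /= negb_forall; apply/existsP.
by exists u; rewrite inE /= ux /= adjE (negbTE nc) andbF.
Qed.

Lemma adj_central (t : 'Z_n) x :
  commute (L ((0, 0, t)%R : heis n)) (L x) <->
  (n %| x.1.1 * t)%N /\ (n %| x.1.2 * t)%N.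
Proof.
have h := comm_central_lift t (L x); rewrite liftE in h.
split.
  by move/commgP/eqP; rewrite h => /indep.
move=> [h1 h2]; apply/commgP; rewrite h.
by rewrite -(expg_mod _ d1n) -(expg_mod _ d2n) /dvdn in h1 h2 *; rewrite (eqP h1) (eqP h2) !expg0 mulg1.
Qed.

Lemma val1 : nat_of_ord (1%R : 'Z_n) = 1%N.
Proof. by []. Qed.

Lemma inW_c (t : 'Z_n) : ~~ (n %| t)%N -> ((0, 0, t)%R : heis n) \in W.
Proof.
move=> nt; apply: (inW (u := Y1)).
  by apply/eqP => -[/eqP]; rewrite oner_eq0.
apply/negP => /eqP/adj_central[+ _].
have -> : nat_of_ord Y1.1.1 = 1%N by [].
by rewrite mul1n (negbTE nt).
Qed.

Lemma inW_nc x : (x.1.1 != 0)%R || (x.1.2 != 0)%R -> x \in W.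
Proof.
case: x => [[a b] c] /=; case/orP => nz.
  apply: (inW (u := Y2)); first by apply/eqP => - [ea _ _]; move: nz; rewrite -ea eqxx.
  apply/negP => /eqP/lift_commute_heis/heis_commuteE; rewrite /Y2 /= mulr1 mul0r.
  by apply/eqP.
apply: (inW (u := Y1)); first by apply/eqP => - [_ eb _]; move: nz; rewrite -eb eqxx.
apply/negP => /eqP/lift_commute_heis/heis_commuteE; rewrite /Y1 /= mulr0 mul1r.
by move=> h; move: nz; rewrite -h eqxx.
Qed.

Section Prime.
Variables p k : nat.
Hypothesis pp : prime p.
Hypothesis nE : n = (p ^ k)%N.
Hypothesis k_gt0 : (0 < k)%N.

Notation R := (induced_rel W e).

Lemma R_sym : symmetric R.
Proof.
by move=> x y; rewrite /induced_rel adj_sym; case: (x \in W); case: (y \in W).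
Qed.

Lemma valM (a b : 'Z_n) : nat_of_ord (a * b)%R = ((a : nat) * b) %% n.
Proof. by rewrite /=; congr (_ %% _); exact: Zp_cast. Qed.

Lemma val_natr i : nat_of_ord (i%:R : 'Z_n)%R = i %% n.
Proof. exact: val_Zp_nat. Qed.

Lemma p_dvd_n : (p %| n)%N.
Proof. by rewrite nE -(prednK k_gt0) expnS dvdn_mulr. Qed.

Lemma natrZ (a : 'Z_n) : a = ((a : nat)%:R)%R.
Proof. by rewrite natr_Zp. Qed.

Lemma Z_eq0 (a : 'Z_n) : (a == 0)%R = ((a : nat) == 0%N).
Proof. by []. Qed.

Lemma disc1 : k = 1%N -> disconnected_on W e.
Proof.
move=> k1; have np : n = p by rewrite nE k1 expn1.
exists Wc, Y1; split.
- apply: inW_c; rewrite dvdn1; apply/eqP => h.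
  by move: n_gt1; rewrite h.
- apply: inW_nc; have -> : Y1.1.1 = 1%R by [].
  by rewrite oner_eq0.
apply/negP => /connectP [pth P lastE].
have small (a : 'Z_n) : (p %| a)%N -> a = 0%R.
  move=> pa; apply/eqP; rewrite Z_eq0 -leqn0 leqNgt; apply/negP => a0.
  have := dvdn_leq a0 pa; rewrite -np leqNgt => /negP; apply.
  have lt := ltn_ord a; have e := Zp_cast n_gt1.
  by apply: leq_trans lt _; rewrite e.
have key : forall pth z, z \in W -> z.1.1 = 0%R -> z.1.2 = 0%R ->
    path R z pth -> (last z pth).1.1 = 0%R.
  elim=> [|u pth' IH] z zW z1 z2 /=; first by [].
  move=> /andP[/and3P[_ uW ezu] P'].
  suff [hu1 hu2] : u.1.1 = 0%R /\ u.1.2 = 0%R by apply: IH P'.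
  case: z z1 z2 zW ezu => [[a b] t] /= -> -> zW.
  have tn0 : (t != 0)%R.
    apply/eqP => t0; move: zW; rewrite t0 -honeE => h.
    by move: notW1; rewrite h.
  rewrite adjE => /andP[_ /eqP /adj_central [h1 h2]].
  have {h1} h1 : (p %| u.1.1 * t)%N by rewrite -np.
  have {h2} h2 : (p %| u.1.2 * t)%N by rewrite -np.
  have pt : ~~ (p %| t)%N.
    apply/negP => pt; move: tn0; rewrite (small _ pt) eqxx.
    by [].
  rewrite !Euclid_dvdM // (negbTE pt) !orbF in h1 h2.
  by split; apply: small.
have := key pth Wc; rewrite -lastE /Y1 /= => /(_ _ erefl erefl P).
have WcW : Wc \in W.
  apply: inW_c; rewrite dvdn1; apply/eqP => h.
  by move: n_gt1; rewrite h.
by move=> /(_ WcW) /eqP; rewrite oner_eq0.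
Qed.

Lemma inW_nc' (a b c : 'Z_n) : (a != 0)%R || (b != 0)%R -> ((a, b, c) : heis n) \in W.
Proof. by move=> h; apply: inW_nc. Qed.

Lemma conn2 : (2 <= k)%N -> ~ disconnected_on W e.
Proof.
move=> k2; set m := (p ^ k.-1)%N.
have p1 := prime_gt1 pp; have p0 := prime_gt0 pp.
have m0 : (0 < m)%N by rewrite expn_gt0 p0.
have nm : n = (p * m)%N by rewrite nE /m -expnS prednK.
have pm : (p %| m)%N.
  have ek : k.-1 = k.-2.+1 by move: k2; clear; lia.
  by rewrite /m ek expnS dvdn_mulr.
have mn : (m < n)%N by rewrite nm ltn_Pmull.
pose h : heis n := (0, 0, m%:R)%R.
have vm : nat_of_ord (m%:R : 'Z_n)%R = m by rewrite val_natr modn_small.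
have hW : h \in W.
  apply: inW_c; rewrite vm; apply/negP => /(dvdn_leq m0).
  by rewrite leqNgt mn.
have conn_div x : x \in W -> (p %| x.1.1)%N -> (p %| x.1.2)%N -> connect R x h.
  move=> xW pa pb; case: (x =P h) => [->|xh]; first exact: connect0.
  apply: connect1; rewrite /induced_rel xW hW /= adjE.
  apply/andP; split; first exact/eqP.
  apply/eqP/commute_sym/adj_central; rewrite vm.
  by split; rewrite [X in (X %| _)%N]nm; apply: dvdn_mul.
have conn_div' a b c : ((a, b, c) : heis n) \in W -> (p %| a)%N -> (p %| b)%N ->
    connect R (a, b, c) h.
  by move=> xW pa pb; apply: (conn_div).
have notp_ne0 (a : 'Z_n) : ~~ (p %| a)%N -> (p%:R * a != 0)%R.
  move=> pa; rewrite [a in (_ * a)%R]natrZ -natrM natr_eq0 [X in (X %| _)%N]nm dvdn_pmul2l //.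
  by apply: contra pa; apply: dvdn_trans.
have notp_fix (a : 'Z_n) : ~~ (p %| a)%N -> (p%:R * a != a)%R.
  move=> pa; apply/eqP => h1.
  have : (((p.-1 * a)%N)%:R : 'Z_n)%R = 0%R.
    have ep : (p%:R : 'Z_n)%R = ((p.-1)%:R + 1)%R by rewrite natr1 prednK.
    rewrite natrM natr_Zp; apply: (addIr a).
    by rewrite add0r -{3}h1 ep mulrDl mul1r.
  move/eqP; rewrite natr_eq0 Gauss_dvdr.
    by move=> na; apply: (negP pa); apply: dvdn_trans p_dvd_n na.
  by rewrite nE coprimeXl // coprimenP.
have divp (a : 'Z_n) : (p %| (p%:R * a)%R)%N.
  rewrite valM val_natr modnMml.
  by rewrite /dvdn (modn_dvdm _ p_dvd_n) modnMr.
have conn_gen x : x \in W -> connect R x h.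
  move=> xW; case: (boolP ((p %| x.1.1) && (p %| x.1.2))%N) => [/andP[]|nd].
    exact: conn_div.
  case: x xW nd => [[a b] c] xW nd.
  set xp := ((a, b, c) : heis n) ^+ p.
  have xpE : xp = ((p%:R * a, p%:R * b, p%:R * c + 'C(p, 2)%:R * a * b)%R : heis n).
    exact: hexpE.
  have xpW : xp \in W.
    rewrite xpE; apply: inW_nc'.
    by move: nd; rewrite negb_and => /orP[/notp_ne0 -> | /notp_ne0 ->]; rewrite ?orbT.
  apply: (connect_trans (y := xp)); last first.
    by rewrite xpE; apply: conn_div'; rewrite -?xpE //; apply: divp.
  apply: connect1; rewrite /induced_rel xW xpW /= adjE.
  apply/andP; split.
    rewrite xpE; apply/eqP => /eqP; rewrite !xpair_eqE => /andP[/andP[/eqP ea /eqP eb] _].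
    move: nd; rewrite negb_and => /orP[/notp_fix | /notp_fix].
      by rewrite -ea eqxx.
    by rewrite -eb eqxx.
  apply/eqP.
  have := (proj1 (commute_lift (L (a, b, c)) (L (a, b, c) ^+ p))).
  rewrite morphX ?inE // liftE; apply.
  exact/commuteX.
move=> [x [y [xW yW]]]; apply/negP/negPn.
apply: connect_trans (conn_gen x xW) _.
by rewrite (sym_connect_sym R_sym) conn_gen.
Qed.

End Prime.

End Indep.

End Stem.


Theorem proposition5p6 (p k : nat) :
  prime p -> odd p -> 0 < k ->
  forall (hT : finGroupType) (f : {morphism [set: hT] >-> H3 p k}),
    schur_cover [set: H3 p k] f ->
    (disconnected_on (reduced_vertices [set: H3 p k] (deep_adj f)) (deep_adj f)
     <-> k = 1).
Proof.
move=> pp op k0 hT f [[fonto kerZ] maxK].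
have n_odd : odd (p ^ k) by rewrite oddX op orbT.
have n_gt1 : (1 < p ^ k)%N by rewrite -(expn0 p) ltn_exp2l // prime_gt1.
have ok : okn (p ^ k) by rewrite /okn n_odd n_gt1.
have big : (p ^ k * p ^ k <= #|('ker f)%g|)%N.
  have := maxK (cov (p ^ k)) (f0m (n := p ^ k)) (stem_f0 ok).
  apply: leq_trans; have := card_ker_f0 (p ^ k).
  by rewrite card_ord Zp_cast.
split.
  move=> disc; case: (ltngtP k 1) => // [|k2].
    by rewrite ltnS leqn0 => /eqP k00; rewrite k00 in k0.
  by case: (conn2 n_odd n_gt1 fonto kerZ big pp erefl k0 k2 disc).
by move=> k1; exact: (disc1 n_odd n_gt1 fonto kerZ big pp erefl k1).
Qed.
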